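(* Let $l\ge2$ and $r\ge3$ be integers, $\kappa\in\bigl(1-\frac{2(r-1)}{lr},1-\frac1l\bigr)$, $\lambda>0$, and set $c=r-\frac{2+r}{3-l(1-\kappa)}$ (so $c>0$). There exists $h_0>0$ such that for every $n$, every $\Gamma\in\mathcal B(l,r,n)$ which is a $(\lambda,\kappa)$ expander, every $0<h<h_0$, every choice of signs $h_i\in\{-h,+h\}$, every high-noise-solution $(\underline\eta,\underline{\widehat\eta})$ of the BP equations on $\Gamma$, and every polymer $\gamma\subset\Gamma$ with $|\gamma|<\lambda n$, $$|K(\gamma)|\le h^{\frac c2|\gamma|}.$$
   Context: $n\ge1$ is an integer with $m=nl/r$ an integer. $V$ is a set of $n$ variable nodes and $C$ a set of $m$ check nodes. $\mathcal B(l,r,n)$ is the set of simple bipartite graphs $\Gamma$ (no multiple edges) with vertex classes $V,C$ and edge set $E$, in which every variable node has degree $l$ and every check node has degree $r$. Letters $i,j$ denote variable nodes and $a,b$ check nodes; $\partial i$ and $\partial a$ denote neighbourhoods in $\Gamma$. Expander: for $\lambda,\kappa>0$, $\Gamma$ is a $(\lambda,\kappa)$ expander if every $\mathcal V\subset V$ with $|\mathcal V|<\lambda n$ satisfies $|\partial\mathcal V|\ge\kappa l|\mathcal V|$, where $\partial\mathcal V$ is the set of check nodes adjacent to at least one node of $\mathcal V$. Channel variables: $h>0$ is a parameter, and $h_i\in\{-h,+h\}$ for each $i\in V$. BP equations: real messages $\eta_{i\to a},\widehat\eta_{a\to i}$, one of each for every edge $(i,a)\in E$, satisfying $\eta_{i\to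 a}=h_i+\sum_{b\in\partial i\setminus a}\widehat\eta_{b\to i}$ and $\widehat\eta_{a\to i}=\tanh^{-1}\bigl(\prod_{j\in\partial a\setminus i}\tanh\eta_{j\to a}\bigr)$. A high-noise-solution is a solution such that, for a constant $A_0$ depending only on $l,r$, $|\eta_{i\to a}|\le h+(l-1)h^{r-1}+A_0h^r$ and $|\widehat\eta_{a\to i}|\le h^{r-1}+A_0h^r$ for every edge. Generalized loops and polymers: a generalized loop $g$ is a subgraph of $\Gamma$ (a set of edges of $\Gamma$ together with their endpoints) in which every vertex has induced degree at least $2$; the empty subgraph is allowed. $d_i(g)$, $d_a(g)$ denote induced degrees in $g$. A polymer $\gamma$ is a nonempty connected generalized loop; $|\gamma|$ is its number of vertices. Activities: with $m_i=\tanh\bigl(h_i+\sum_{a\in\partial i}\widehat\eta_{a\to i}\bigr)$, $K(\emptyset)=1$ and $K(g)=\prod_{i\in g\cap V}K_i\prod_{a\in g\cap C}K_a$, where $$K_i=\frac{(1-m_i)^{d_i(g)-1}+(-1)^{d_i(g)}(1+m_i)^{d_i(g)-1}}{2(1-m_i^2)^{d_i(g)-1}},$$ $$K_a=\prod_{i\in\partial a\cap g}\sqrt{\frac{1-\tanh^2\eta_{i\to a}}{1-\prod_{j\in\partial a\setminus i}\tanh^2\eta_{j\to a}}}\;\prod_{i\in\partial a\cap g^c}\tanh\eta_{i\to a}\;\cdot\;\frac{1+(-1)^{d_a(g)}\prod_{i\in\partial a}\tanh^{d_a(g)-1}\eta_{i\to a}}{1+\prod_{i\in\partial a}\tanh\eta_{i\to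 a}}\;\prod_{i\in\partial a\cap g}\sqrt{1-m_i^2},$$ where $\partial a\cap g$ is the set of $i\in\partial a$ with $(i,a)$ an edge of $g$, and $\partial a\cap g^c=\partial a\setminus(\partial a\cap g)$. *)

(* Defs.v *)
From Stdlib Require Import Reals.
From mathcomp Require Import all_boot.

Set Implicit Arguments.
Unset Strict Implicit.
Unset Printing Implicit Defensive.

Local Open Scope R_scope.

Definition atanh (x : R) : R := ln ((1 + x) / (1 - x)) / 2.

(* A bipartite graph with variable nodes 'I_n and check nodes 'I_m is given by
   its adjacency relation G i a ("edge (i,a)"); it is automatically simple. *)

Definition in_B (l r n m : nat) (G : 'I_n -> 'I_m -> bool) : Prop :=
  (m * r = n * l)%N /\
  (forall i : 'I_n, #|[set a : 'I_m | G i a]| = l) /\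
  (forall a : 'I_m, #|[set i : 'I_n | G i a]| = r).

Definition nbhd (n m : nat) (G : 'I_n -> 'I_m -> bool) (V : {set 'I_n}) : {set 'I_m} :=
  [set a : 'I_m | [exists i in V, G i a]].

Definition expander (l n m : nat) (G : 'I_n -> 'I_m -> bool) (lam kap : R) : Prop :=
  forall V : {set 'I_n}, INR #|V| < lam * INR n ->
    kap * INR l * INR #|V| <= INR #|nbhd G V|.

(* BP equations; eta i a = eta_{i->a}, etahat i a = widehat eta_{a->i} *)
Definition BP_solution (n m : nat) (G : 'I_n -> 'I_m -> bool) (hs : 'I_n -> R)
    (eta etahat : 'I_n -> 'I_m -> R) : Prop :=
  forall (i : 'I_n) (a : 'I_m), G i a ->
    eta i a = hs i + \big[Rplus/0]_(b : 'I_m | G i b && (b != a)) etahat i b /\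
    etahat i a = atanh (\big[Rmult/1]_(j : 'I_n | G j a && (j != i)) tanh (eta j a)).

Definition high_noise (l r n m : nat) (G : 'I_n -> 'I_m -> bool) (A0 h : R)
    (eta etahat : 'I_n -> 'I_m -> R) : Prop :=
  forall (i : 'I_n) (a : 'I_m), G i a ->
    Rabs (eta i a) <= h + (INR l - 1) * h ^ (r.-1) + A0 * h ^ r /\
    Rabs (etahat i a) <= h ^ (r.-1) + A0 * h ^ r.

(* subgraphs are given by their edge sets *)
Definition degV (n m : nat) (g : {set 'I_n * 'I_m}) (i : 'I_n) : nat :=
  #|[set a : 'I_m | (i, a) \in g]|.
Definition degC (n m : nat) (g : {set 'I_n * 'I_m}) (a : 'I_m) : nat :=
  #|[set i : 'I_n | (i, a) \in g]|.

Definition gen_loop (n m : nat) (G : 'I_n -> 'I_m -> bool) (g : {set 'I_n * 'I_m}) : Prop :=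
  (forall e, e \in g -> G e.1 e.2) /\
  (forall i, (0 < degV g i)%N -> (2 <= degV g i)%N) /\
  (forall a, (0 < degC g a)%N -> (2 <= degC g a)%N).

Definition in_sub (n m : nat) (g : {set 'I_n * 'I_m}) (u : 'I_n + 'I_m) : bool :=
  match u with inl i => (0 < degV g i)%N | inr a => (0 < degC g a)%N end.

Definition sub_adj (n m : nat) (g : {set 'I_n * 'I_m}) : rel ('I_n + 'I_m) :=
  fun u v => match u, v with
             | inl i, inr a => (i, a) \in g
             | inr a, inl i => (i, a) \in g
             | _, _ => false
             end.

Definition polymer (n m : nat) (G : 'I_n -> 'I_m -> bool) (g : {set 'I_n * 'I_m}) : Prop :=
  g != set0 /\ gen_loop G g /\
  (forall u v, in_sub g u -> in_sub g v -> connect (sub_adj g) u v).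

Definition nverts (n m : nat) (g : {set 'I_n * 'I_m}) : nat :=
  (#|[set i : 'I_n | (0 < degV g i)%N]| + #|[set a : 'I_m | (0 < degC g a)%N]|)%N.

Definition mag (n m : nat) (G : 'I_n -> 'I_m -> bool) (hs : 'I_n -> R)
    (etahat : 'I_n -> 'I_m -> R) (i : 'I_n) : R :=
  tanh (hs i + \big[Rplus/0]_(a : 'I_m | G i a) etahat i a).

Definition K_var (n m : nat) (G : 'I_n -> 'I_m -> bool) (hs : 'I_n -> R)
    (etahat : 'I_n -> 'I_m -> R) (g : {set 'I_n * 'I_m}) (i : 'I_n) : R :=
  let d := degV g i in
  let mi := mag G hs etahat i in
  ((1 - mi) ^ (d.-1) + (-1) ^ d * (1 + mi) ^ (d.-1)) / (2 * (1 - mi ^ 2) ^ (d.-1)).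

Definition K_check (n m : nat) (G : 'I_n -> 'I_m -> bool) (hs : 'I_n -> R)
    (eta etahat : 'I_n -> 'I_m -> R) (g : {set 'I_n * 'I_m}) (a : 'I_m) : R :=
  let d := degC g a in
  (\big[Rmult/1]_(i : 'I_n | G i a && ((i, a) \in g))
      sqrt ((1 - tanh (eta i a) ^ 2) /
            (1 - \big[Rmult/1]_(j : 'I_n | G j a && (j != i)) tanh (eta j a) ^ 2))) *
  (\big[Rmult/1]_(i : 'I_n | G i a && ((i, a) \notin g)) tanh (eta i a)) *
  ((1 + (-1) ^ d * \big[Rmult/1]_(i : 'I_n | G i a) tanh (eta i a) ^ (d.-1)) /
   (1 + \big[Rmult/1]_(i : 'I_n | G i a) tanh (eta i a))) *
  (\big[Rmult/1]_(i : 'I_n | G i a && ((i, a) \in g))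
      sqrt (1 - mag G hs etahat i ^ 2)).

Definition K_act (n m : nat) (G : 'I_n -> 'I_m -> bool) (hs : 'I_n -> R)
    (eta etahat : 'I_n -> 'I_m -> R) (g : {set 'I_n * 'I_m}) : R :=
  if g == set0 then 1 else
  (\big[Rmult/1]_(i : 'I_n | (0 < degV g i)%N) K_var G hs etahat g i) *
  (\big[Rmult/1]_(a : 'I_m | (0 < degC g a)%N) K_check G hs eta etahat g a).

(* Main.v *)
Require Import Defs.
From Stdlib Require Import Reals Lra Psatz.
From mathcomp Require Import all_boot.
From mathcomp Require Import zify.

Lemma card_sum (T : finType) (P : pred T) : #|[set x | P x]| = \sum_x (P x : nat).
Proof. rewrite -sum1dep_card big_mkcond; apply eq_bigr => x _; by case: (P x). Qed.

Lemma sum_const_card (T : finType) (P : pred T) c : \sum_(x | P x) c = #|[set x | P x]| * c.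
Proof. rewrite -sum1dep_card big_distrl /=; apply eq_bigr => *; by rewrite mul1n. Qed.

Lemma sum_degV n m (g : {set 'I_n * 'I_m}) :
  \sum_i degV g i = \sum_a degC g a.
Proof.
rewrite /degV /degC.
under eq_bigr => i _ do rewrite card_sum.
under [RHS]eq_bigr => a _ do rewrite card_sum.
by rewrite exchange_big.
Qed.

Lemma sum_pos (T : finType) (f : T -> nat) : \sum_x f x = \sum_(x | 0 < f x) f x.
Proof. rewrite [RHS]big_mkcond; apply eq_bigr => x _; by case: (f x). Qed.

Lemma degC_le l r n m (G : 'I_n -> 'I_m -> bool) g a : in_B l r G -> gen_loop G g -> degC g a <= r.
Proof.
move=> [_ [_ HC]] [Hg _]; rewrite /degC -(HC a); apply: subset_leq_card.
apply/subsetP => i; rewrite !inE => H; exact: (Hg _ H).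
Qed.

Lemma degV_le l r n m (G : 'I_n -> 'I_m -> bool) g i : in_B l r G -> gen_loop G g -> degV g i <= l.
Proof.
move=> [_ [HV _]] [Hg _]; rewrite /degV -(HV i); apply: subset_leq_card.
apply/subsetP => a; rewrite !inE => H; exact: (Hg _ H).
Qed.

Lemma comb (l r n m : nat) (G : 'I_n -> 'I_m -> bool) g :
  in_B l r G -> gen_loop G g ->
  let Vs := [set i | 0 < degV g i] in
  let k := #|[set a | 0 < degC g a]| in
  let e := \sum_a degC g a in
  [/\ 2 * #|Vs| <= e,
      e + #|nbhd G Vs| <= l * #|Vs| + k &
      \sum_(a | 0 < degC g a) (r - degC g a) + e = r * k].
Proof.
move=> HB Hg Vs k e.
have [Hsub [Hv Hc]] := Hg.
have [_ [HV HC]] := HB.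
split.
- rewrite /e -sum_degV sum_pos /Vs mulnC -sum_const_card.
  apply: leq_sum => i Hi. exact: Hv.
- pose s a := \sum_i ((0 < degV g i) && G i a : nat).
  have Hs : \sum_a s a = l * #|Vs|.
    rewrite /s exchange_big /= /Vs card_sum big_distrr /=.
    apply eq_bigr => i _.
    case: (0 < degV g i) => /=; last by rewrite big1 // muln0.
    by rewrite muln1 -(HV i) card_sum.
  have Hk : k = \sum_a (0 < degC g a : nat) by rewrite /k card_sum.
  have Hn : #|nbhd G Vs| = \sum_a (a \in nbhd G Vs : nat).
    by rewrite -sum1_card big_mkcond; apply eq_bigr => a _; case: (_ \in _).
  rewrite Hn Hk -Hs /e -!big_split /=.
  apply: leq_sum => a _.
  have Hda : degC g a <= s a.
    rewrite /degC card_sum /s; apply: leq_sum => i _.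
    case Hia: ((i, a) \in g) => //=.
    have -> : 0 < degV g i by rewrite /degV card_gt0; apply/set0Pn; exists a; rewrite inE.
    by rewrite (Hsub _ Hia).
  case Hd: (0 < degC g a) => /=.
    by apply: leq_add => //; apply: leq_b1.
  rewrite addn0.
  move/negbT: Hd; rewrite -eqn0Ngt => /eqP ->; rewrite add0n.
  case Hin: (a \in nbhd G Vs) => //=.
  move: Hin; rewrite inE => /existsP [i /andP [Hi Gia]].
  rewrite /s (bigD1 i) //=; move: Hi; rewrite /Vs inE => -> /=; by rewrite Gia.
- rewrite /e sum_pos -big_split /= /k mulnC -sum_const_card.
  apply eq_bigr => a _; rewrite subnK //; exact: (@degC_le l r n m G g a HB Hg).
Qed.
Local Open Scope R_scope.
Lemma tanh_small x : Rabs x <= 1/2 -> Rabs (tanh x) <= 2 * Rabs x.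
Proof.
move=> Hx.
have Hu := exp_pos x. have Hw := exp_pos (- x).
have Huw : exp x * exp (- x) = 1 by rewrite -exp_plus; replace (x + - x) with 0 by ring; exact exp_0.
have H1 := exp_ineq1_le x. have H2 := exp_ineq1_le (- x).
rewrite /tanh /sinh /cosh.
set u := exp x in Hu Huw H1 *. set w := exp (-x) in Hw Huw H2 *.
have Hs : 2 <= u + w by lra.
replace ((u - w) / 2 / ((u + w) / 2)) with ((u - w) / (u + w)) by (field; lra).
rewrite /Rdiv Rabs_mult Rabs_inv (Rabs_right (u + w)); last lra.
apply (Rmult_le_reg_r (u + w)); first lra.
rewrite Rmult_assoc Rinv_l; last lra.
rewrite Rmult_1_r.
have Hux : u * (1 - x) <= 1 by nra.
have Hwx : w * (1 + x) <= 1 by nra.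
move: Hx; rewrite /Rabs; case: Rcase_abs => Hx0; case: Rcase_abs => Hd Hx; nra.
Qed.

Lemma big_bound (I : finType) (P : pred I) (F : I -> R) (f : I -> nat) (C X : R) :
  0 <= C -> 0 <= X -> (forall i, P i -> Rabs (F i) <= C * X ^ f i) ->
  Rabs (\big[Rmult/1]_(i | P i) F i) <=
    C ^ (\sum_(i | P i) 1)%N * X ^ (\sum_(i | P i) f i)%N.
Proof.
move=> HC HX HF.
apply: (big_rec3 (fun x (y z : nat) => Rabs x <= C ^ y * X ^ z)).
  rewrite Rabs_R1 /=; lra.
move=> i y1 y2 y3 Pi IH /=.
rewrite Rabs_mult !pow_add.
have := HF i Pi => Hi.
have h1 : 0 <= Rabs (F i) by apply Rabs_pos.
have h2 : 0 <= Rabs y1 by apply Rabs_pos.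
have h3 := pow_le C y2 HC. have h4 := pow_le X y3 HX.
have h5 := pow_le C 1 HC. have h6 := pow_le X (f i) HX.
rewrite /= Rmult_1_r in h5 *.
have := Rmult_le_compat _ _ _ _ h1 h2 Hi IH.
have : C * X ^ f i * (C ^ y2 * X ^ y3) = C * C ^ y2 * (X ^ f i * X ^ y3) by ring.
lra.
Qed.

Lemma sum_bound (I : finType) (P : pred I) (F : I -> R) (q : R) :
  (forall i, P i -> Rabs (F i) <= q) ->
  Rabs (\big[Rplus/0]_(i | P i) F i) <= q * INR (\sum_(i | P i) 1)%N.
Proof.
move=> HF.
apply: (big_rec2 (fun x (y : nat) => Rabs x <= q * INR y)).
  rewrite Rabs_R0 /=; lra.
move=> i y1 y2 Pi IH.
have -> : INR (1 + y2)%N = INR y2 + 1 by rewrite -S_INR.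
have := HF i Pi => Hi.
have := Rabs_triang (F i) y1. lra.
Qed.
Lemma exponent_bound (l r kap v k e E : R) :
  0 < 3 - l * (1 - kap) -> 1 - r <= l * (1 - kap) -> 0 <= v ->
  2 * v <= e -> e + kap * l * v <= l * v + k -> E + e = r * k ->
  (r - (2 + r) / (3 - l * (1 - kap))) * (v + k) <= E.
Proof.
move=> H3 Ha Hv He Hk HE.
set a := l * (1 - kap) in H3 Ha *.
set s := (2 + r) / (3 - a).
have Hs : s * (3 - a) = 2 + r by rewrite /s; field; lra.
have Hs1 : 1 <= s.
  apply (Rmult_le_reg_r (3 - a)); first lra. rewrite Hs; lra.
have Hid : E - (r - s) * (v + k) = s * (k - e + a * v) + (s - 1) * (e - 2 * v) + v * (s * (3 - a) - 2 - r)
  by rewrite /a; nra.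
rewrite Hs in Hid.
have h1 : 0 <= s * (k - e + a * v) by apply Rmult_le_pos; rewrite /a; nra.
have h2 : 0 <= (s - 1) * (e - 2 * v) by apply Rmult_le_pos; lra.
nra.
Qed.

Lemma Kvar_bound (mi : R) (d : nat) :
  Rabs mi <= 1/2 ->
  Rabs (((1 - mi) ^ (Nat.pred d) + (-1) ^ d * (1 + mi) ^ (Nat.pred d)) / (2 * (1 - mi ^ 2) ^ (Nat.pred d)))
   <= 2 ^ (Nat.pred d).
Proof.
move=> Hm.
set p := Nat.pred d.
have Hm1 : 1/2 <= 1 - mi by move: Hm; rewrite /Rabs; case: Rcase_abs; lra.
have Hm2 : 1/2 <= 1 + mi by move: Hm; rewrite /Rabs; case: Rcase_abs; lra.
have -> : 1 - mi ^ 2 = (1 - mi) * (1 + mi) by ring.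
rewrite Rpow_mult_distr.
set A := (1 - mi) ^ p. set B := (1 + mi) ^ p.
have HA : 1 <= 2 ^ p * A by rewrite /A -Rpow_mult_distr; apply pow_R1_Rle; lra.
have HB : 1 <= 2 ^ p * B by rewrite /B -Rpow_mult_distr; apply pow_R1_Rle; lra.
have HA0 : 0 < A by apply pow_lt; lra.
have HB0 : 0 < B by apply pow_lt; lra.
have H2 : 0 < 2 ^ p by apply pow_lt; lra.
rewrite /Rdiv Rabs_mult Rabs_inv.
have -> : Rabs (2 * (A * B)) = 2 * (A * B) by apply Rabs_right; nra.
have Hn : Rabs (A + (-1) ^ d * B) <= A + B.
  apply: Rle_trans; first by apply Rabs_triang.
  rewrite Rabs_mult pow_1_abs.
  have -> : Rabs A = A by apply Rabs_right; lra.
  have -> : Rabs B = B by apply Rabs_right; lra.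
  lra.
apply (Rmult_le_reg_r (2 * (A * B))); first nra.
rewrite Rmult_assoc Rinv_l; last nra.
nra.
Qed.

Lemma pow_le_base X n : 0 <= X <= 1 -> (1 <= n)%N -> X ^ n <= X.
Proof.
move=> HX; case: n => [//|n] _ /=.
have : X ^ n <= 1 by rewrite -(pow1 n); apply pow_incr.
have := pow_le X n (proj1 HX). nra.
Qed.

Lemma Kcheck_bound l r n m (G : 'I_n -> 'I_m -> bool) hs eta etahat g a (X : R) :
  in_B l r G -> gen_loop G g -> (3 <= r)%N -> 0 <= X <= 1/2 ->
  (forall i, G i a -> Rabs (tanh (eta i a)) <= X) ->
  Rabs (K_check G hs eta etahat g a) <= 2 ^ (r + 2)%N * X ^ (r - degC g a)%N.
Proof.
move=> HB Hg Hr HX Ht.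
have Hr' : (3 <= r)%coq_nat by apply/leP.
have [Hsub _] := Hg.
have [_ [_ HC]] := HB.
rewrite /K_check Rabs_mult Rabs_mult Rabs_mult.
set T1 := \big[Rmult/1]_(i | G i a && ((i, a) \in g)) _.
set T2 := \big[Rmult/1]_(i | G i a && ((i, a) \notin g)) _.
set T4 := \big[Rmult/1]_(i | G i a && ((i, a) \in g)) sqrt _.
have H1 : Rabs T1 <= 2 ^ r.
  have := @big_bound _ (fun i => G i a && ((i, a) \in g)) (fun i => sqrt ((1 - tanh (eta i a) ^ 2) / (1 - \big[Rmult/1]_(j | G j a && (j != i)) tanh (eta j a) ^ 2))) (fun _ => 0%N) 2 1.
  move=> /(_ ltac:(lra) ltac:(lra)) H.
  refine (Rle_trans _ _ _ (H _) _).
    move=> i /andP [Gia _].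
    set P := \big[Rmult/1]_(j | G j a && (j != i)) _.
    have HP : Rabs P <= 1/4.
      have := @big_bound _ (fun j => G j a && (j != i)) (fun j => tanh (eta j a) ^ 2) (fun _ => 1%N) 1 (X ^ 2).
      move=> /(_ ltac:(lra) ltac:(nra)) H'.
      refine (Rle_trans _ _ _ (H' _) _).
        move=> j /andP [Gja _]; rewrite Rmult_1_l pow_1 -RPow_abs.
        apply pow_incr; split; [apply Rabs_pos| exact: Ht].
      rewrite pow1 Rmult_1_l.
      have Hcard : (\sum_(j | G j a && (j != i)) 1 = r.-1)%N.
        rewrite sum1dep_card.
        have := cardsD1 i [set j | G j a]; rewrite HC inE Gia /=.
        have -> : [set j | G j a] :\ i = [set j | G j a && (j != i)].
          by apply/setP => j; rewrite !inE andbC.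
        move=> ->; by rewrite add1n.
      rewrite Hcard.
      apply: Rle_trans; first apply: (pow_le_base (X ^ 2)); [nra | apply/leP; lia|].
      nra.
    have Ht2 : tanh (eta i a) ^ 2 <= 1/4.
      have := pow_incr _ _ 2 (conj (Rabs_pos _) (Ht i Gia)); rewrite RPow_abs.
      have := Rle_abs (tanh (eta i a) ^ 2). simpl. nra.
    have HP' : - (1/4) <= P <= 1/4 by move: HP; rewrite /Rabs; case: Rcase_abs; lra.
    rewrite Rabs_right; last by apply Rle_ge, sqrt_pos.
    rewrite pow_O Rmult_1_r.
    rewrite -(sqrt_square 2); last lra.
    apply sqrt_le_1_alt.
    rewrite /Rdiv; apply (Rmult_le_reg_r (1 - P)); first lra.
    rewrite Rmult_assoc Rinv_l; last lra.
    have := pow2_ge_0 (tanh (eta i a)). nra.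
  rewrite pow1 Rmult_1_r sum1dep_card.
  apply Rle_pow; first lra.
  apply/leP; rewrite -(HC a); apply: subset_leq_card.
  by apply/subsetP => i; rewrite !inE => /andP [].
have H2 : Rabs T2 <= X ^ (r - degC g a)%N.
  have := @big_bound _ (fun i => G i a && ((i, a) \notin g)) (fun i => tanh (eta i a)) (fun _ => 1%N) 1 X.
  move=> /(_ ltac:(lra) ltac:(lra)) H.
  refine (Rle_trans _ _ _ (H _) _).
    move=> i /andP [Gia _]; rewrite pow_1 Rmult_1_l; exact: Ht.
  rewrite pow1 Rmult_1_l sum1dep_card.
  have := cardsID [set i | (i, a) \in g] [set i | G i a].
  have -> : [set i | G i a] :&: [set i | (i, a) \in g] = [set i | (i, a) \in g].
    apply/setP => i; rewrite !inE; case E: ((i, a) \in g); last by rewrite andbF.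
    by rewrite (Hsub _ E).
  have -> : [set i | G i a] :\: [set i | (i, a) \in g] = [set i | G i a && ((i, a) \notin g)].
    by apply/setP => i; rewrite !inE andbC.
  rewrite HC /degC => <-. rewrite addKn. lra.
have H3 : Rabs ((1 + (-1) ^ degC g a * \big[Rmult/1]_(i | G i a) tanh (eta i a) ^ (degC g a).-1) /
     (1 + \big[Rmult/1]_(i | G i a) tanh (eta i a))) <= 4.
  set P1 := \big[Rmult/1]_(i | G i a) _ ^ _.
  set P2 := \big[Rmult/1]_(i | G i a) _.
  have HP1 : Rabs P1 <= 1.
    have := @big_bound _ (fun i => G i a) (fun i => tanh (eta i a) ^ (degC g a).-1) (fun _ => 0%N) 1 1.
    move=> /(_ ltac:(lra) ltac:(lra)) H.
    rewrite !pow1 !Rmult_1_l in H; rewrite /P1; apply: H.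
    move=> i Gia; rewrite -RPow_abs -(pow1 (degC g a).-1).
    apply pow_incr; split; [apply Rabs_pos|]. have := Ht i Gia; lra.
  have HP2 : Rabs P2 <= 1/2.
    have := @big_bound _ (fun i => G i a) (fun i => tanh (eta i a)) (fun _ => 1%N) 1 X.
    move=> /(_ ltac:(lra) ltac:(lra)) H.
    refine (Rle_trans _ _ _ (H _) _).
      move=> i Gia; rewrite pow_1 Rmult_1_l; exact: Ht.
    rewrite pow1 Rmult_1_l sum1dep_card HC.
    apply: Rle_trans; first apply: pow_le_base; [lra| apply/leP; lia|lra].
  have Hd : 1/2 <= 1 + P2 by move: HP2; rewrite /Rabs; case: Rcase_abs; lra.
  have Hn : Rabs (1 + (-1) ^ degC g a * P1) <= 2.
    apply: Rle_trans; first apply Rabs_triang.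
    rewrite Rabs_R1 Rabs_mult pow_1_abs; lra.
  rewrite /Rdiv Rabs_mult Rabs_inv (Rabs_right (1 + P2)); last lra.
  apply (Rmult_le_reg_r (1 + P2)); first lra.
  rewrite Rmult_assoc Rinv_l; last lra.
  have := Rabs_pos (1 + (-1) ^ degC g a * P1). nra.
have H4 : Rabs T4 <= 1.
  have := @big_bound _ (fun i => G i a && ((i, a) \in g)) (fun i => sqrt (1 - mag G hs etahat i ^ 2)) (fun _ => 0%N) 1 1.
  move=> /(_ ltac:(lra) ltac:(lra)) H.
  rewrite !pow1 !Rmult_1_l in H; rewrite /T4; apply: H.
  move=> i _; rewrite Rabs_right; last by apply Rle_ge, sqrt_pos.
  apply Rle_trans with (sqrt 1); last by rewrite sqrt_1; lra.
  apply sqrt_le_1_alt.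
  have := pow2_ge_0 (mag G hs etahat i). lra.
have E : (2 ^ (r + 2)%N = 2 ^ r * 4)%R by rewrite pow_add; simpl; ring.
rewrite E.
have h1 := Rabs_pos T1. have h2 := Rabs_pos T2. have h4 := Rabs_pos T4.
have h3 := Rabs_pos ((1 + (-1) ^ degC g a * \big[Rmult/1]_(i | G i a) tanh (eta i a) ^ (degC g a).-1) /
     (1 + \big[Rmult/1]_(i | G i a) tanh (eta i a))).
have := pow_le X (r - degC g a)%N (proj1 HX). have := pow_le 2 r ltac:(lra).
move=> p1 p2.
apply: Rle_trans.
  apply Rmult_le_compat; [|exact h4| |exact H4].
    apply Rmult_le_pos; [apply Rmult_le_pos; assumption | exact h3].
  apply Rmult_le_compat; [apply Rmult_le_pos; assumption| exact h3| |exact H3].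
  apply Rmult_le_compat; [exact h1|exact h2|exact H1|exact H2].
apply Req_le; ring.
Qed.

Lemma exp_le_mono x y : x <= y -> exp x <= exp y.
Proof. case/Rle_lt_or_eq_dec => H; [left; exact: exp_increasing | rewrite H; lra]. Qed.

Lemma final_real (C X h D c N E : R) :
  0 < C -> 0 < X < 1 -> 0 < h -> 0 < c -> 0 <= N ->
  X = 2 * (X / (2 * h)) * h ->
  D = C * Rpower (2 * (X / (2 * h))) c ->
  D * Rpower h (c / 2) <= 1 ->
  c * N <= E ->
  Rpower C N * Rpower X E <= Rpower h (c / 2 * N).
Proof.
move=> HC HX Hh Hc HN HXe HD HDh HE.
have HlnX : ln X < 0 by rewrite -ln_1; apply ln_increasing; lra.
have H1 : Rpower X E <= Rpower X (c * N).
  rewrite /Rpower; apply exp_le_mono; nra.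
set Bt := X / (2 * h) in HXe HD *.
have HBt : 0 < Bt by rewrite /Bt; apply Rdiv_lt_0_compat; lra.
have HX2 : Rpower X c = Rpower (2 * Bt) c * (Rpower h (c/2) * Rpower h (c/2)).
  rewrite -Rpower_plus.
  replace (c / 2 + c / 2) with c by field.
  rewrite Rpower_mult_distr; try lra. by rewrite -HXe.
have Hpc : 0 < Rpower h (c/2) by apply exp_pos.
have Hkey : C * Rpower X c <= Rpower h (c / 2).
  rewrite HX2. rewrite HD in HDh.
  have : C * (Rpower (2 * Bt) c * (Rpower h (c / 2) * Rpower h (c / 2))) =
     (C * Rpower (2 * Bt) c * Rpower h (c / 2)) * Rpower h (c / 2) by ring.
  move=> ->. have := Rmult_le_compat_r _ _ _ (Rlt_le _ _ Hpc) HDh. lra.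
have HCX : 0 < C * Rpower X c by apply Rmult_lt_0_compat; [lra | apply exp_pos].
apply Rle_trans with (Rpower C N * Rpower X (c * N)).
  apply Rmult_le_compat_l; [left; apply exp_pos | exact H1].
rewrite -(Rpower_mult X c N) Rpower_mult_distr; try lra; last by apply exp_pos.
rewrite -(Rpower_mult h (c/2) N).
apply Rle_Rpower_l; lra.
Qed.

Lemma INR_addn a b : INR (a + b)%N = INR a + INR b.
Proof. by rewrite -plus_INR. Qed.
Lemma INR_muln a b : INR (a * b)%N = INR a * INR b.
Proof. by rewrite -mult_INR. Qed.

Theorem mainTheorem8 (l r : nat) (kap lam A0 : R) :
  (2 <= l)%N -> (3 <= r)%N ->
  1 - 2 * (INR r - 1) / (INR l * INR r) < kap -> kap < 1 - 1 / INR l ->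
  0 < lam ->
  let c := INR r - (2 + INR r) / (3 - INR l * (1 - kap)) in
  exists h0 : R, 0 < h0 /\
    forall (n m : nat) (G : 'I_n -> 'I_m -> bool),
      in_B l r G -> expander l G lam kap ->
      forall (h : R), 0 < h -> h < h0 ->
      forall (hs : 'I_n -> R), (forall i, hs i = h \/ hs i = - h) ->
      forall (eta etahat : 'I_n -> 'I_m -> R),
        BP_solution G hs eta etahat -> high_noise l r G A0 h eta etahat ->
      forall (g : {set 'I_n * 'I_m}),
        polymer G g -> INR (nverts g) < lam * INR n ->
        Rabs (K_act G hs eta etahat g) <= Rpower h (c / 2 * INR (nverts g)).
Proof.
move=> Hl Hr Hk1 Hk2 Hlam c.
have Hl' : (2 <= l)%coq_nat by apply/leP.
have Hr' : (3 <= r)%coq_nat by apply/leP.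
have HlR : 2 <= INR l by have := le_INR _ _ Hl'; simpl; lra.
have HrR : 3 <= INR r by have := le_INR _ _ Hr'; simpl; lra.
set a := INR l * (1 - kap).
have Ha1 : 1 < a.
  rewrite /a. have : 1 / INR l < 1 - kap by lra.
  move=> H. apply (Rmult_lt_compat_l (INR l)) in H; last lra.
  by rewrite /Rdiv Rmult_1_l Rinv_r in H; lra.
have Ha2 : a * INR r < 2 * (INR r - 1).
  rewrite /a. have : 1 - kap < 2 * (INR r - 1) / (INR l * INR r) by lra.
  move=> H. apply (Rmult_lt_compat_l (INR l * INR r)) in H; last nra.
  have E : INR l * INR r * (2 * (INR r - 1) / (INR l * INR r)) = 2 * (INR r - 1) by field; lra.
  rewrite E in H. nra.
have H3a : 0 < 3 - a by nra.
have Hc : 0 < c.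
  rewrite /c -/a.
  have : (2 + INR r) / (3 - a) < INR r; last lra.
  apply (Rmult_lt_reg_r (3 - a)); first lra.
  rewrite /Rdiv Rmult_assoc Rinv_l; lra.
set B := 1 + INR l * (1 + Rabs A0).
have HA0 := Rabs_pos A0.
have HB : 1 <= B by rewrite /B; nra.
set C := 2 ^ (l + r + 2)%N.
have HC : 1 <= C by apply pow_R1_Rle; lra.
set D := C * Rpower (2 * B) c.
have HD : 0 < D by apply Rmult_lt_0_compat; [lra | apply exp_pos].
exists (Rmin (/ (4 * B)) (Rpower D (- 2 / c))).
split.
  apply Rmin_glb_lt; [apply Rinv_0_lt_compat; lra | apply exp_pos].
move=> n m G HBG Hexp h Hh Hh0 hs Hhs eta etahat _ Hhn g Hpoly Hsize.
have Hh1 : h < / (4 * B) by have := Rmin_l (/ (4 * B)) (Rpower D (- 2 / c)); lra.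
have Hh2 : h < Rpower D (- 2 / c) by have := Rmin_r (/ (4 * B)) (Rpower D (- 2 / c)); lra.
have HBh : B * h < 1/4.
  apply (Rmult_lt_compat_l (4 * B)) in Hh1; last lra.
  rewrite Rinv_r in Hh1; lra.
have Hhle1 : h <= 1 by nra.
set X := 2 * B * h.
have HX : 0 < X <= 1/2 by rewrite /X; nra.
have Hpr1 : h ^ r.-1 <= h by apply pow_le_base; [lra | apply/leP; lia].
have Hpr : h ^ r <= h by apply pow_le_base; [lra | apply/leP; lia].
have Hpr0 : 0 <= h ^ r by apply pow_le; lra.
have HA0h : A0 * h ^ r <= Rabs A0 * h.
  apply Rle_trans with (Rabs A0 * h ^ r); last by apply Rmult_le_compat_l.
  have := Rle_abs A0. nra.
have Ht : forall i a, G i a -> Rabs (tanh (eta i a)) <= X.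
  move=> i a0 Gia. have [He _] := Hhn i a0 Gia.
  have He' : Rabs (eta i a0) <= B * h.
    apply: Rle_trans; first exact He.
    rewrite /B. have : (INR l - 1) * h ^ r.-1 <= (INR l - 1) * h by apply Rmult_le_compat_l; lra.
    have : 0 <= (INR l - 1) * (Rabs A0 * h) by apply Rmult_le_pos; nra.
    lra.
  apply: Rle_trans; first (apply tanh_small; lra).
  rewrite /X; lra.
have Hm : forall i, Rabs (mag G hs etahat i) <= X.
  move=> i. rewrite /mag.
  set S := \big[Rplus/0]_(_ | _) _.
  have Hsum : Rabs S <= (1 + Rabs A0) * h * INR l.
    have [_ [HV _]] := HBG.
    rewrite -(HV i) -sum1dep_card /S.
    apply sum_bound => a0 Gia.
    have [_ Heh] := Hhn i a0 Gia.
    apply: Rle_trans; first exact Heh. nra.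
  have Hhi : Rabs (hs i) = h by case: (Hhs i) => ->; [rewrite Rabs_right | rewrite Rabs_Ropp Rabs_right]; lra.
  have Harg : Rabs (hs i + S) <= B * h.
    apply: Rle_trans; first apply Rabs_triang. rewrite Hhi /B.
    have : 0 <= INR l * h * Rabs A0 by apply Rmult_le_pos; nra.
    nra.
  apply: Rle_trans; first (apply tanh_small; lra).
  rewrite /X; lra.
have [Hgne [Hgl _]] := Hpoly.
have Hkv : forall i, Rabs (K_var G hs etahat g i) <= C * 1 ^ 0.
  move=> i. rewrite pow_O Rmult_1_r /K_var.
  apply: Rle_trans; first (apply Kvar_bound; have := Hm i; lra).
  rewrite /C; apply Rle_pow; first lra.
  have := @degV_le l r n m G g i HBG Hgl. move/leP. lia.
have Hkc : forall a0, Rabs (K_check G hs eta etahat g a0) <= C * X ^ (r - degC g a0)%N.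
  move=> a0.
  have HK := Kcheck_bound l r n m G hs eta etahat g a0 X HBG Hgl Hr ltac:(lra) (fun i => Ht i a0).
  apply: (Rle_trans _ _ _ HK).
  apply Rmult_le_compat_r; first (apply pow_le; lra).
  rewrite /C; apply Rle_pow; first lra. apply/leP; lia.
rewrite /K_act (negbTE Hgne).
rewrite Rabs_mult.
have HPV := @big_bound _ (fun i => 0 < degV g i)%N (K_var G hs etahat g) (fun _ => 0%N) C 1 ltac:(lra) ltac:(lra) (fun i _ => Hkv i).
have HPC := @big_bound _ (fun a0 => 0 < degC g a0)%N (K_check G hs eta etahat g) (fun a0 => r - degC g a0)%N C X ltac:(lra) ltac:(lra) (fun a0 _ => Hkc a0).
rewrite pow1 Rmult_1_r !sum1dep_card in HPV.
rewrite !sum1dep_card in HPC.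
set v := #|[set i | (0 < degV g i)%N]| in HPV.
set k := #|[set a0 | (0 < degC g a0)%N]| in HPC.
set E := (\sum_(a0 | (0 < degC g a0)%N) (r - degC g a0))%N in HPC.
have Hnv : nverts g = (v + k)%N by [].
have [Hc1 Hc2 Hc3] := @comb l r n m G g HBG Hgl.
set e := (\sum_a0 degC g a0)%N in Hc1 Hc2 Hc3.
have Hvn : INR v < lam * INR n.
  apply: Rle_lt_trans; last exact Hsize.
  apply le_INR; rewrite Hnv; apply/leP; apply leq_addr.
have Hex := Hexp _ Hvn.
have R1 : 2 * INR v <= INR e by rewrite -(mult_INR 2); apply le_INR; apply/leP.
have R2 : INR e + INR #|nbhd G [set i | (0 < degV g i)%N]| <= INR l * INR v + INR k.
  by rewrite -plus_INR -mult_INR -plus_INR; apply le_INR; apply/leP.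
have R3 : INR E + INR e = INR r * INR k by have := f_equal INR Hc3; rewrite INR_addn INR_muln.
have HEc : c * (INR v + INR k) <= INR E.
  have Haeq : a = INR l * (1 - kap) by [].
  have Hv0 := pos_INR v.
  rewrite -/v in Hex.
  apply (exponent_bound (INR l) (INR r) kap (INR v) (INR k) (INR e) (INR E)); lra.
have HPVn : 0 <= Rabs (\big[Rmult/1]_(i | (0 < degV g i)%N) K_var G hs etahat g i) by apply Rabs_pos.
have HPCn : 0 <= Rabs (\big[Rmult/1]_(a0 | (0 < degC g a0)%N) K_check G hs eta etahat g a0) by apply Rabs_pos.
apply (Rle_trans _ (C ^ v * (C ^ k * X ^ E))).
  apply Rmult_le_compat; assumption.
rewrite -Rmult_assoc; have -> : C ^ v * C ^ k = C ^ nverts g by rewrite Hnv -pow_add.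
rewrite -!Rpower_pow; try lra.
apply (final_real C X h D c); try lra.
- apply pos_INR.
- rewrite /X; field; lra.
- rewrite /D /X; f_equal; f_equal; field; lra.
- have Hp : Rpower h (c/2) <= Rpower (Rpower D (-2/c)) (c/2) by apply Rle_Rpower_l; lra.
  rewrite Rpower_mult in Hp.
  replace (-2 / c * (c / 2)) with (-(1)) in Hp by (field; lra).
  rewrite Rpower_Ropp Rpower_1 in Hp; last lra.
  have := Rmult_le_compat_l D _ _ (Rlt_le _ _ HD) Hp.
  rewrite Rinv_r; lra.
- rewrite Hnv INR_addn; lra.
Qed.
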